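(* Let $l\ge 1$, let $1\le k\le l$ and let $S\subseteq\{1,\dots,l\}$. A key of length $l$ and index $k$ and a lock of length $l$ and index set $S$ can match (i.e. the key can be placed inside the lock, with its rectangle occupying the rectangular part of the lock's negative space, and the remaining uncovered part of the lock's negative space can be filled exactly by copies of the tooth) if and only if $k\in S$.
   Context: The tooth is the plus-shaped $9$-omino consisting of a central unit square and two unit squares extending in a straight line from it in each of the four directions. A key is a bump on an edge of a polyomino: a key of length $l$ and index $k$ is a $(6l-2)\times 1$ rectangle of unit squares, perpendicular to the edge, together with one copy of the tooth attached to the side of the rectangle at the $(6k-2)$-th square of the rectangle (counting from the square closest to the edge). A lock is a dent on an edge: the negative space of a lock of length $l$ and index set $S$ is a $(6l-2)\times 1$ rectangle perpendicular to the edge together with one tooth-shaped region attached (in the same manner as for a key) at the $(6x-2)$-th square (counting from the square closest to the edge) for every $x\in S$. *)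

(* Defs.v *)
(* Convention: the edge carrying the key/lock is the line y = 1/2, the
   rectangle is the column x = 0, rows y = 1 .. 6l-2 (row i is the i-th
   square counting from the edge), and teeth are attached on the side x > 0. *)
From Stdlib Require Import ZArith List Bool Lia.
Open Scope Z_scope.

Definition cell := (Z * Z)%type.

Definition in_tooth (c : cell) : bool :=
  let '(x, y) := c in
  ((x =? 0) && (Z.abs y <=? 2)) || ((y =? 0) && (Z.abs x <=? 2)).

Definition in_tooth_at (t c : cell) : bool :=
  in_tooth (fst c - fst t, snd c - snd t).

Definition in_rect (l : nat) (c : cell) : bool :=
  (fst c =? 0) && (1 <=? snd c) && (snd c <=? 6 * Z.of_nat l - 2).

(* Tooth attached to the side of the rectangle at its j-th square:
   its arm end is adjacent to square (0, j), so its centre is (3, j). *)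
Definition tooth_attached (j : Z) (c : cell) : bool :=
  in_tooth_at (3, j) c.

(* Key of length l and index k (placed in the lock position). *)
Definition in_key (l k : nat) (c : cell) : bool :=
  in_rect l c || tooth_attached (6 * Z.of_nat k - 2) c.

(* Negative space of a lock of length l and index set S. *)
Definition in_lock (l : nat) (S : list nat) (c : cell) : bool :=
  in_rect l c || existsb (fun x => tooth_attached (6 * Z.of_nat x - 2) c) S.

(* A region R (boolean predicate) is tiled exactly by the copies of the tooth
   translated by the vectors in ts: each cell of R lies in exactly one tile and
   each cell outside R lies in no tile.  (The tooth is invariant under all
   rotations and reflections, so copies of the tooth are just translates.) *)
Definition tiled_by_teeth (R : cell -> bool) (ts : list cell) : Prop :=
  forall c : cell,
    length (filter (fun t => in_tooth_at t c) ts) = (if R c then 1%nat else 0%nat).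

Definition can_match (l k : nat) (S : list nat) : Prop :=
  (forall c : cell, in_key l k c = true -> in_lock l S c = true) /\
  exists ts : list cell,
    tiled_by_teeth (fun c => in_lock l S c && negb (in_key l k c)) ts.

(* Main.v *)
Require Import Defs.
From Stdlib Require Import ZArith List Bool Lia.

Definition gk (x : nat) : cell := (3, 6 * Z.of_nat x - 2).

Lemma tooth_uniq (a b : nat) (c : cell) :
  in_tooth_at (gk a) c = true -> in_tooth_at (gk b) c = true -> a = b.
Proof.
  destruct c as [x y]; unfold in_tooth_at, in_tooth, gk; cbn [fst snd].
  rewrite !orb_true_iff, !andb_true_iff, !Z.eqb_eq, !Z.leb_le.
  intros H1 H2; lia.
Qed.

Lemma rect_tooth (l : nat) (j : Z) (c : cell) :
  in_rect l c = true -> in_tooth_at (3, j) c = false.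
Proof.
  destruct c as [x y]; unfold in_rect, in_tooth_at, in_tooth; cbn [fst snd].
  rewrite !andb_true_iff, !Z.eqb_eq, !Z.leb_le.
  intros H. destruct (_ || _) eqn:E; auto.
  rewrite !orb_true_iff, !andb_true_iff, !Z.eqb_eq, !Z.leb_le in E. lia.
Qed.

Lemma count_teeth (c : cell) (L : list nat) : NoDup L ->
  length (filter (fun t => in_tooth_at t c) (map gk L)) =
  if existsb (fun x => in_tooth_at (gk x) c) L then 1%nat else 0%nat.
Proof.
  induction L as [|a L IH]; intros HN; simpl; auto.
  inversion HN; subst.
  destruct (in_tooth_at (gk a) c) eqn:Ea; simpl; rewrite IH; auto.
  destruct (existsb _ L) eqn:E; auto.
  apply existsb_exists in E as [x [Hx Hx2]].
  pose proof (tooth_uniq _ _ _ Ea Hx2); subst; contradiction.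
Qed.

Theorem lemma2p2 (l k : nat) (S : list nat)
  (hl : (1 <= l)%nat) (hk : (1 <= k <= l)%nat)
  (hS : forall x, In x S -> (1 <= x <= l)%nat) :
  can_match l k S <-> In k S.
Proof.
  split.
  - intros [H _].
    specialize (H (3, 6 * Z.of_nat k - 2)).
    unfold in_key, in_lock in H.
    assert (Ht : tooth_attached (6 * Z.of_nat k - 2) (3, 6 * Z.of_nat k - 2) = true)
      by (unfold tooth_attached, in_tooth_at, in_tooth; simpl;
          rewrite Z.sub_diag; reflexivity).
    rewrite Ht, orb_true_r in H. specialize (H eq_refl).
    apply orb_true_iff in H as [H|H].
    + unfold in_rect in H; simpl in H; discriminate.
    + apply existsb_exists in H as [x [Hx Hx2]].
      assert (x = k) by (apply (tooth_uniq x k (3, 6 * Z.of_nat k - 2)); auto).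
      subst; auto.
  - intros HkS. split.
    + intros c. unfold in_key, in_lock. rewrite !orb_true_iff.
      intros [H|H]; [left; auto|right].
      apply existsb_exists. exists k; auto.
    + set (T := filter (fun x => negb (Nat.eqb x k)) (nodup Nat.eq_dec S)).
      exists (map gk T). intros c.
      rewrite count_teeth by (apply NoDup_filter, NoDup_nodup).
      destruct (existsb _ T) eqn:E;
      destruct (in_lock l S c && negb (in_key l k c)) eqn:F; auto; exfalso.
      * apply existsb_exists in E as [x [Hx Hx2]].
        unfold T in Hx. apply filter_In in Hx as [Hx Hxk].
        apply nodup_In in Hx.
        apply negb_true_iff, Nat.eqb_neq in Hxk.
        apply andb_false_iff in F as [F|F].
        -- unfold in_lock in F. apply orb_false_iff in F as [_ F].
           assert (existsb (fun x0 => tooth_attached (6 * Z.of_nat x0 - 2) c) S = true)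
             by (apply existsb_exists; exists x; auto).
           congruence.
        -- apply negb_false_iff in F. unfold in_key in F.
           apply orb_true_iff in F as [F|F].
           ++ pose proof (rect_tooth l (6 * Z.of_nat x - 2) c F).
              unfold gk in Hx2. congruence.
           ++ apply Hxk. apply (tooth_uniq x k c); auto.
      * apply andb_true_iff in F as [F1 F2].
        apply negb_true_iff in F2. unfold in_key in F2.
        apply orb_false_iff in F2 as [F2 F3].
        unfold in_lock in F1. rewrite F2 in F1. simpl in F1.
        apply existsb_exists in F1 as [x [Hx Hx2]].
        destruct (Nat.eq_dec x k) as [->|Hne].
        -- simpl in Hx2, F3; congruence.
        -- assert (existsb (fun x0 => in_tooth_at (gk x0) c) T = true).
           { apply existsb_exists. exists x. split; auto.
             unfold T. apply filter_In. split.
             - apply nodup_In; auto.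
             - apply negb_true_iff, Nat.eqb_neq; auto. }
           congruence.
Qed.
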